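(* For any $\delta>0$ and any integer $s\in\{0,1,\dots,n\}$ with $s>8\log\frac{4}{\delta}$, the algorithm $C_s$ is $(\varepsilon,\frac{1}{2}\delta)$-differentially private for \[ \varepsilon=\sqrt{\frac{32\log\frac{4}{\delta}}{s}}\cdot\left(1-\frac{s}{n}\right). \]
   Context: For $s\in\{0,\dots,n\}$, the algorithm $C_s$ on input $(x_1,\dots,x_n)\in\{0,1\}^n$ chooses $H$ uniformly at random among subsets of $[n]$ of size $s$, draws $B\sim\mathrm{Bin}(s,1/2)$ independently, and outputs $\sum_{i\notin H}x_i+B$. An algorithm $M$ on $\{0,1\}^n$ is $(\varepsilon,\delta)$-differentially private if for all $X,X'$ differing in one coordinate and every set $W$ of outputs, $\Pr[M(X)\in W]\le e^{\varepsilon}\Pr[M(X')\in W]+\delta$. $\log$ is the natural logarithm. *)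

(* Defs.v *)
From HB Require Import structures.
From mathcomp Require Import all_boot all_order all_algebra.
From mathcomp Require Import reals.
From mathcomp Require Import sequences.
From mathcomp.analysis Require Import exp.
Set Implicit Arguments. Unset Strict Implicit. Unset Printing Implicit Defensive.
Import Order.TTheory GRing.Theory Num.Theory.
Local Open Scope ring_scope.

(* Pr[C_s(X) = k] : H uniform among subsets of [n] of size s, B ~ Bin(s,1/2),
   output = sum_{i notin H} x_i + B. *)
Definition C_prob (R : realType) (n s : nat) (X : {ffun 'I_n -> bool}) (k : nat) : R :=
  ('C(n, s)%:R)^-1 *
  \sum_(H : {set 'I_n} | #|H| == s)
     (let c := #|[set i | (i \notin H) && X i]| in
      if (c <= k)%N then 'C(s, k - c)%:R / 2 ^+ s else 0).

(* Pr[C_s(X) \in W] for an arbitrary set W of outputs (outputs lie in {0,...,n}). *)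
Definition C_probW (R : realType) (n s : nat) (X : {ffun 'I_n -> bool}) (W : pred nat) : R :=
  \sum_(k < n.+1 | W k) C_prob R s X k.

Definition neighbors (n : nat) (X X' : {ffun 'I_n -> bool}) : Prop :=
  #|[set i | X i != X' i]| = 1%N.

Definition C_dp (R : realType) (n s : nat) (eps delta : R) : Prop :=
  forall X X' : {ffun 'I_n -> bool}, neighbors X X' ->
  forall W : pred nat, C_probW R s X W <= expR eps * C_probW R s X' W + delta.

(* Main.v *)
Require Import Defs.
From HB Require Import structures.
From mathcomp Require Import all_boot all_order all_algebra.
From mathcomp Require Import reals.
From mathcomp Require Import sequences.
From mathcomp.analysis Require Import exp.
From mathcomp Require Import boolp classical_sets functions topology normedtype derive realfun.
From mathcomp Require Import fingroup perm zify ring lra.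
Import Order.TTheory GRing.Theory Num.Theory.
Import numFieldNormedType.Exports.
Local Open Scope ring_scope.

Lemma chi_le (R : realType) (m : R) : 0 <= m -> (2 - m) * expR m <= 2 + m.
Proof.
move=> m0.
pose chi : R -> R := (cst 2 - id) * expR - id.
have D (x : R) : is_derive x (1:R) chi ((1 - x) * expR x - 1).
  apply: is_derive_eq.
  rewrite /chi.
  rewrite /= /cst /= !fctE.  rewrite /GRing.scale /=.  lra.
have cont : continuous chi.
  move=> x; have [dd _] := D x.
  by apply: differentiable_continuous; apply/derivable1_diffP.
have dec : forall x y, 0 <= x -> x <= y -> chi y <= chi x.
  apply: ler0_derive1_nincry.
  - by move=> x _; have [dd _] := D x.
  - move=> x; rewrite in_itv /= andbT => x0.
    have [_ dv] := D x. rewrite derive1E dv.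
    have := expR_ge1Dx (- x). rewrite expRN => h.
    have := ler_wpM2r (expR_ge0 x) h. rewrite mulVf ?gt_eqF ?expR_gt0 //. lra.
  - move=> x; exact/continuous_subspaceT.
have := dec 0 m (lexx _) m0. rewrite /chi /= !fctE /cst expR0. lra.
Qed.



Lemma hoeff_le (R : realType) (m : R) : 0 <= m ->
  1 + expR m <= 2 * expR (m / 2 + m ^+ 2 / 8).
Proof.
move=> m0.
pose g : R -> R := cst (-1/2) * id + cst (-1/8) * (id * id).
pose psi : R -> R := (cst 1 + expR) * (expR \o g).
have D (x : R) : is_derive x (1:R) psi
   (expR (g x) * (expR x - (1 + expR x) * ((2 + x) / 4))).
  apply: is_derive_eq.
  rewrite /psi /g /= /cst /= !fctE /GRing.scale /=. by field.
have cont : continuous psi.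
  move=> x; have [dd _] := D x.
  by apply: differentiable_continuous; apply/derivable1_diffP.
have dec : forall x y, 0 <= x -> x <= y -> psi y <= psi x.
  apply: ler0_derive1_nincry.
  - by move=> x _; have [dd _] := D x.
  - move=> x; rewrite in_itv /= andbT => x0.
    have [_ dv] := D x. rewrite derive1E dv.
    have h := @chi_le R x (ltW x0).
    rewrite mulr_ge0_le0 ?expR_ge0 //. lra.
  - move=> x; exact/continuous_subspaceT.
have := dec 0 m (lexx _) m0. rewrite /psi /g /= !fctE /cst /= !mulr0 addr0 expR0.
move=> h.
have e : expR (m / 2 + m ^+ 2 / 8) * expR (-1 / 2 * m + -1 / 8 * (m * m)) = 1.
  rewrite -expRD. have -> : m / 2 + m ^+ 2 / 8 + (-1 / 2 * m + -1 / 8 * (m * m)) = 0 by rewrite expr2; field.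
  by rewrite expR0.
have := ler_wpM2r (expR_ge0 (m / 2 + m ^+ 2 / 8)) h.
rewrite -mulrA [X in _ * X]mulrC e mulr1. lra.
Qed.

Lemma expR_quarter (R : realType) : expR (1/4 : R) <= 2.
Proof.
have h := @expR_ge1Dx R (-(1/4)).
rewrite expRN in h.
have p := expR_gt0 (1/4 : R).
have : (1 + - (1 / 4)) * expR (1/4 : R) <= 1.
  by have := ler_wpM2r (ltW p) h; rewrite mulVf ?gt_eqF.
nra.
Qed.

Lemma tail_bound (R : realType) (s : nat) (e L : R) : (0 < s)%N -> 0 <= e -> e < 2 ->
  e ^+ 2 * s%:R = 32 * L ->
  \sum_(v < s.+1 | (1 + e) * 'C(s, v.+1)%:R < 'C(s, v)%:R) 'C(s, v)%:R / 2 ^+ s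
    <= 2 * expR (- L).
Proof.
move=> s0 e0 e2 eL.
pose mu : R := 2 * e / (2 + e).
pose T : R := ((1 + e) * s%:R - 1) / (2 + e).
have mu0 : 0 <= mu by rewrite /mu divr_ge0 // ?mulr_ge0 //; lra.
have badT : forall v : 'I_s.+1, (1 + e) * 'C(s, v.+1)%:R < 'C(s, v)%:R -> T < v%:R.
  move=> v bad.
  have vs : (v <= s)%N by rewrite -ltnS.
  have Cp : (0 : R) < 'C(s, v)%:R by rewrite ltr0n bin_gt0.
  have id1 : (v.+1)%:R * ('C(s, v.+1)%:R : R) = (s%:R - v%:R) * 'C(s, v)%:R.
    by rewrite -natrB // -!natrM mul_bin_left.
  have : (1 + e) * (s%:R - v%:R) * 'C(s, v)%:R < (v.+1)%:R * 'C(s, v)%:R.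
    by rewrite -mulrA -id1 mulrCA ltr_pM2l ?ltr0n.
  rewrite ltr_pM2r // => h.
  rewrite /T ltr_pdivrMr; last lra.
  rewrite -natr1 in h. nra.
have step1 : \sum_(v < s.+1 | (1 + e) * 'C(s, v.+1)%:R < 'C(s, v)%:R) ('C(s, v)%:R / 2 ^+ s : R)
   <= \sum_(v < s.+1) 'C(s, v)%:R / 2 ^+ s * expR (mu * (v%:R - T)).
  rewrite big_mkcond /=; apply: ler_sum => v _.
  have t0 : (0 : R) <= 'C(s, v)%:R / 2 ^+ s by rewrite divr_ge0 // exprn_ge0.
  case: ifP => bad.
    rewrite -{1}[_ / _]mulr1 ler_wpM2l //.
    have := expR_ge1Dx (mu * (v%:R - T)).
    have := badT v bad. nra.
  by rewrite mulr_ge0 // expR_ge0.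
have step2 : \sum_(v < s.+1) ('C(s, v)%:R / 2 ^+ s * expR (mu * (v%:R - T)) : R)
   = expR (- (mu * T)) / 2 ^+ s * (expR mu + 1) ^+ s.
  rewrite [(expR mu + 1) ^+ s]exprD1n mulr_sumr; apply: eq_bigr => v _.
  have -> : expR (mu * (v%:R - T)) = expR mu ^+ v * expR (-(mu*T)).
    by rewrite -expRM_natr -expRD; congr expR; ring.
  rewrite -mulr_natr. ring.
have hb := @hoeff_le R mu mu0.
have step3 : (expR mu + 1) ^+ s <= 2 ^+ s * expR (s%:R * (mu / 2 + mu ^+ 2 / 8)).
  rewrite expRM_natl -exprMn. apply: lerXn2r; rewrite ?nnegrE ?addr_ge0 ?expR_ge0 //.
    by rewrite mulr_ge0 ?expR_ge0.
  by rewrite addrC.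
have step4 : - (mu * T) + s%:R * (mu / 2 + mu ^+ 2 / 8) <= 1/4 - L.
  have LE : L = e ^+ 2 * s%:R / 32 by rewrite eL; field.
  have d0 : 2 + e != 0 by rewrite gt_eqF //; lra.
  have key : - (mu * T) + s%:R * (mu / 2 + mu ^+ 2 / 8) - (1/4 - L) =
     (s%:R * e ^+ 2 * ((2 + e) ^+ 2 - 16) / 32 - (1 - e / 2) ^+ 2) / (2 + e) ^+ 2.
    rewrite LE /mu /T. field. exact: d0.
  rewrite -subr_le0 key.
  apply: mulr_le0_ge0; last by rewrite invr_ge0 exprn_ge0 //; lra.
  have sp : (0:R) <= s%:R by rewrite ler0n.
  have : (2 + e) ^+ 2 - 16 <= 0 by rewrite expr2; nra.
  have : 0 <= (1 - e / 2) ^+ 2 by rewrite sqr_ge0.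
  have : 0 <= s%:R * e ^+ 2 by rewrite mulr_ge0 // sqr_ge0.
  nra.
apply: (le_trans step1); rewrite step2.
have p2 : (0:R) < 2 ^+ s by rewrite exprn_gt0.
apply: le_trans.
  rewrite -mulrA [X in _ * X]mulrC mulrA. apply: ler_wpM2r; first by rewrite invr_ge0 ltW.
  apply: ler_wpM2l; first exact: expR_ge0.
  exact: step3.
have -> : forall A B C : R, B != 0 -> A * (B * C) / B = A * C.
  by move=> A B C B0; field.
rewrite ?gt_eqF // -expRD.
apply: le_trans (_ : expR (1/4 - L) <= _).
  rewrite ler_expR; exact: step4.
rewrite expRD ler_wpM2r ?expR_ge0 //.
exact: expR_quarter.
by rewrite gt_eqF.
Qed.

Lemma shift_sum (R : realType) (g : nat -> R) s c N : (forall v, 0 <= g v) ->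
  (forall v, (s < v)%N -> g v = 0) ->
  \sum_(k < N) (if (c <= k)%N then g (k - c)%N else 0) <= \sum_(v < s.+1) g v.
Proof.
move=> g0 gs.
pose h k := if (c <= k)%N then g (k - c)%N else 0.
have h0 : forall k, 0 <= h k by move=> k; rewrite /h; case: ifP.
rewrite -(big_mkord xpredT h) -(big_mkord xpredT g).
apply: (@le_trans _ _ (\sum_(0 <= k < c + s.+1) h k)).
  case: (leqP N (c + s.+1)) => NM.
    rewrite [X in _ <= X](@big_cat_nat _ _ _ N 0 (c + s.+1)) //= lerDl.
    by apply: sumr_ge0 => k _; exact: h0.
  rewrite [X in X <= _](@big_cat_nat _ _ _ (c + s.+1) 0 N) //=; last exact: ltnW.
  rewrite [X in _ + X]big1_seq ?addr0 //.
  move=> k /andP[_]; rewrite mem_iota => /andP[k1 k2].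
  rewrite /h; have ck : (c <= k)%N by lia.
  by rewrite ck gs //; lia.
rewrite (@big_cat_nat _ _ _ c) //= ?leq_addr // big1_seq ?add0r; last first.
  move=> k /andP[_]; rewrite mem_iota => /andP[k1 k2].
  by rewrite /h; have -> : (c <= k)%N = false by lia.
rewrite -{1}[c]add0n big_addn addKn.
rewrite le_eqVlt; apply/orP; left; apply/eqP; apply: eq_bigr => i _.
by rewrite /h leq_addl addnK.
Qed.

Section Comb.
Variable n : nat.
Implicit Types (X : {ffun 'I_n -> bool}) (H : {set 'I_n}).

Definition cnt X H : nat := #|[set i | (i \notin H) && X i]|.
Definition sw (e j : 'I_n) H : {set 'I_n} := [set x | tperm e j x \in H].

Lemma card_sw e j H : #|sw e j H| = #|H|.
Proof. by rewrite -[RHS](card_preimset _ (@perm_inj _ (tperm e j))); apply: eq_card => x; rewrite !inE. Qed.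

Lemma swK e j : involutive (sw e j).
Proof. by move=> H; apply/setP => x; rewrite !inE tpermK. Qed.

Variables (X X' : {ffun 'I_n -> bool}) (j : 'I_n).
Hypothesis XX' : forall i, i != j -> X i = X' i.
Hypothesis Xj : X' j = ~~ X j.

Lemma cnt_in H : j \in H -> cnt X H = cnt X' H.
Proof.
move=> jH; rewrite /cnt; apply: eq_card => i; rewrite !inE.
case: (eqVneq i j) => [->|ij]; first by rewrite jH.
by rewrite XX'.
Qed.

Lemma cnt_out H : j \notin H ->
  (if X j then cnt X H = (cnt X' H).+1 else cnt X' H = (cnt X H).+1).
Proof.
move=> jH; rewrite /cnt.
case: ifP => xj.
  have -> : [set i | (i \notin H) && X i] = j |: [set i | (i \notin H) && X' i].
    apply/setP => i; rewrite !inE; case: (eqVneq i j) => [->|ij] /=; first by rewrite jH xj.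
    by rewrite XX'.
  by rewrite cardsU1 !inE Xj xj andbF.
have -> : [set i | (i \notin H) && X' i] = j |: [set i | (i \notin H) && X i].
  apply/setP => i; rewrite !inE; case: (eqVneq i j) => [->|ij] /=; first by rewrite jH Xj xj.
  by rewrite XX'.
by rewrite cardsU1 !inE xj andbF.
Qed.

Lemma cnt_sw e H : e \in H -> j \notin H ->
  cnt X (sw e j H) = cnt X' (sw e j H) /\
  (cnt X (sw e j H) = cnt X H \/ cnt X (sw e j H) = cnt X' H).
Proof.
move=> eH jH.
have ej : e != j by apply: contraNneq jH => <-.
split; first by apply: cnt_in; rewrite !inE tpermR.
have E1 : cnt X (sw e j H) = #|[set i | (i \notin H) && X (tperm e j i)]|.
  rewrite /cnt -[RHS](card_preimset _ (@perm_inj _ (tperm e j))); apply: eq_card => x.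
  by rewrite !inE tpermK.
rewrite E1 /cnt.
have key : forall i, i \notin H -> X (tperm e j i) = if i == j then X e else X i.
  move=> i iH; case: (eqVneq i j) => [->|ij]; first by rewrite tpermR.
  have ie : e != i by apply: contraNneq iH => <-.
  by rewrite tpermD // eq_sym.
case: (boolP (X e == X j)) => [/eqP xe|xe].
  left; apply: eq_card => i; rewrite !inE.
  case: (boolP (i \in H)) => //= iH; rewrite key //.
  by case: (eqVneq i j) => [->|].
right; apply: eq_card => i; rewrite !inE.
case: (boolP (i \in H)) => //= iH; rewrite key //.
case: (eqVneq i j) => [->|ij]; last by rewrite XX'.
by rewrite Xj; move: xe; case: (X e); case: (X j).
Qed.

Lemma double_count (R : realType) (s : nat) (F : {set 'I_n} -> R) :
  \sum_(H : {set 'I_n} | (#|H| == s) && (j \notin H)) \sum_(e in H) F (sw e j H)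
  = (n - s)%:R * \sum_(H : {set 'I_n} | (#|H| == s) && (j \in H)) F H.
Proof.
rewrite (exchange_big_dep xpredT) //=.
have step : forall e : 'I_n,
  \sum_(H : {set 'I_n} | ((#|H| == s) && (j \notin H)) && (e \in H)) F (sw e j H)
  = \sum_(H : {set 'I_n} | ((#|H| == s) && (j \in H)) && (e \notin H)) F H.
  move=> e; rewrite [RHS](reindex_inj (@inv_inj _ _ (swK e j))) /=.
  apply: eq_bigl => H; rewrite card_sw !inE tpermR tpermL.
  by case: (#|H| == s); case: (j \in H); case: (e \in H).
rewrite (eq_bigr _ (fun e _ => step e)).
rewrite -(exchange_big_dep xpredT) //= mulr_sumr; apply: eq_bigr => H /andP[/eqP cH _].
rewrite (eq_bigl (fun e => e \in ~: H)); last by move=> e; rewrite inE.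
rewrite sumr_const mulr_natl; congr (_ *+ _).
by have := cardsC H; rewrite card_ord cH => E; lia.
Qed.

Definition fk (R : realType) (s k c : nat) : R :=
  if (c <= k)%N then 'C(s, k - c)%:R / 2 ^+ s else 0.

Lemma fk_ge0 (R : realType) s k c : (0 : R) <= fk R s k c.
Proof. by rewrite /fk; case: ifP => // _; rewrite divr_ge0 // exprn_ge0. Qed.

Lemma pair_ineq (R : realType) (e0 p q L Rr W : R) : 0 <= e0 -> 0 <= p -> 0 <= q ->
  p + q = 1 -> 0 <= L -> 0 <= Rr -> (W = L \/ W = Rr) ->
  L - Rr - (if L <= (1 + e0) * Rr then 0 else L) <= e0 * q * Rr + e0 * p * W.
Proof.
move=> e00 p0 q0 pq L0 R0 hW.
have h1 : 0 <= e0 * q * Rr by rewrite !mulr_ge0.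
have -> : p = 1 - q by lra.
case: hW => ->; case: ifP => h.
- have h2 : 0 <= e0 * (1 - q) * L by rewrite !mulr_ge0 // subr_ge0; lra.
  case: (lerP Rr L) => hl; last by lra.
  have : e0 * (1 - q) * L >= e0 * (1 - q) * Rr.
    by rewrite ler_wpM2l // mulr_ge0 // subr_ge0; lra.
  nra.
- have h2 : 0 <= e0 * (1 - q) * L by rewrite !mulr_ge0 // subr_ge0; lra.
  lra.
- nra.
- have h2 : 0 <= e0 * (1 - q) * Rr by rewrite !mulr_ge0 // subr_ge0; lra.
  lra.
Qed.

Definition Err (R : realType) (s k : nat) (e0 : R) (H : {set 'I_n}) : R :=
  if j \in H then 0 else
  (if fk R s k (cnt X H) <= (1 + e0) * fk R s k (cnt X' H) then 0 else fk R s k (cnt X H)).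

Lemma main_k (R : realType) (s k : nat) (e0 : R) : (0 < s)%N -> (s <= n)%N -> 0 <= e0 ->
  \sum_(H : {set 'I_n} | #|H| == s) fk R s k (cnt X H) <=
  (1 + e0 * (1 - s%:R / n%:R)) * \sum_(H : {set 'I_n} | #|H| == s) fk R s k (cnt X' H)
  + \sum_(H : {set 'I_n} | #|H| == s) Err R s k e0 H.
Proof.
move=> s0 sn e00.
have n0 : (0 < n)%N by apply: leq_trans sn.
pose q : R := 1 - s%:R / n%:R.
pose p : R := s%:R / n%:R.
have nR : (0 : R) < n%:R by rewrite ltr0n.
have sR : (0 : R) < s%:R by rewrite ltr0n.
have p0 : 0 <= p by rewrite /p divr_ge0 // ltW.
have q0 : 0 <= q by rewrite /q subr_ge0 ler_pdivrMr // mul1r ler_nat.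
have pq : p + q = 1 by rewrite /p /q; lra.
have h1 : \sum_(H : {set 'I_n} | (#|H| == s) && (j \in H)) fk R s k (cnt X H)
   = \sum_(H : {set 'I_n} | (#|H| == s) && (j \in H)) fk R s k (cnt X' H).
  by apply: eq_bigr => H /andP[_ jH]; rewrite cnt_in.
have h2 : \sum_(H : {set 'I_n} | (#|H| == s) && (j \in H)) Err R s k e0 H = 0.
  by apply: big1 => H /andP[_ jH]; rewrite /Err jH.
have key : s%:R * (\sum_(H : {set 'I_n} | (#|H| == s) && (j \notin H)) fk R s k (cnt X H)
    - \sum_(H : {set 'I_n} | (#|H| == s) && (j \notin H)) fk R s k (cnt X' H)
    - \sum_(H : {set 'I_n} | (#|H| == s) && (j \notin H)) Err R s k e0 H)
  <= s%:R * (e0 * q * \sum_(H : {set 'I_n} | (#|H| == s) && (j \notin H)) fk R s k (cnt X' H))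
     + e0 * p * ((n - s)%:R * \sum_(H : {set 'I_n} | (#|H| == s) && (j \in H)) fk R s k (cnt X' H)).
  rewrite -sumrB -sumrB mulr_sumr.
  rewrite -(@double_count R s (fun H => fk R s k (cnt X' H))) !mulr_sumr -big_split /=.
  apply: ler_sum => H /andP[/eqP cH jH].
  have eqs : forall y : R, s%:R * y = \sum_(e in H) y.
    by move=> y; rewrite sumr_const cH mulr_natl.
  rewrite !eqs mulr_sumr -big_split /=.
  apply: ler_sum => e eH.
  rewrite /Err (negbTE jH).
  have [c1 c2] := @cnt_sw e H eH jH.
  apply: pair_ineq => //; try exact: fk_ge0.
  by rewrite -c1; case: c2 => ->; [left|right].
have e1 : forall A : R, e0 * p * ((n - s)%:R * A) = s%:R * (e0 * q * A).
  move=> A; rewrite /p /q natrB //. field. by rewrite gt_eqF.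
rewrite e1 -mulrDr ler_pM2l // in key.
have lin : forall (a b c d z : R), b - c - d <= z * c + z * a ->
    a + b <= (1 + z) * (a + c) + (0 + d).
  move=> a b c d z h. have -> : (1 + z) * (a + c) = a + c + (z * c + z * a) by ring.
  lra.
rewrite [\sum_(H : {set 'I_n} | #|H| == s) fk R s k (cnt X H)](bigID (fun H : {set 'I_n} => j \in H)) /=.
rewrite [\sum_(H : {set 'I_n} | #|H| == s) fk R s k (cnt X' H)](bigID (fun H : {set 'I_n} => j \in H)) /=.
rewrite [\sum_(H : {set 'I_n} | #|H| == s) Err R s k e0 H](bigID (fun H : {set 'I_n} => j \in H)) /= h1 h2.
apply: lin. exact: key.
Qed.

Lemma cmp_div (R : realType) (s : nat) (a x y : R) :
  (x / 2 ^+ s <= a * (y / 2 ^+ s)) = ~~ (a * y < x).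
Proof.
have p : (0 : R) < (2 ^+ s)^-1 by rewrite invr_gt0 exprn_gt0.
by rewrite mulrA ler_pM2r // leNgt.
Qed.

Lemma err_sum (R : realType) (s N : nat) (e0 : R) (H : {set 'I_n}) : j \notin H ->
  \sum_(k < N) Err R s k e0 H <=
  \sum_(v < s.+1 | (1 + e0) * 'C(s, v.+1)%:R < 'C(s, v)%:R) 'C(s, v)%:R / 2 ^+ s.
Proof.
move=> jH.
pose g v : R := if (1 + e0) * 'C(s, v.+1)%:R < 'C(s, v)%:R then 'C(s, v)%:R / 2 ^+ s else 0.
have gb : \sum_(v < s.+1) g v =
   \sum_(v < s.+1 | (1 + e0) * 'C(s, v.+1)%:R < 'C(s, v)%:R) 'C(s, v)%:R / 2 ^+ s.
  by rewrite [RHS]big_mkcond.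
have g0 : forall v, 0 <= g v.
  by move=> v; rewrite /g; case: ifP => // _; rewrite divr_ge0 // exprn_ge0.
have gs : forall v, (s < v)%N -> g v = 0.
  move=> v sv; have b1 : 'C(s, v) = 0%N by rewrite bin_small.
  have b2 : 'C(s, v.+1) = 0%N by rewrite bin_small // ltnW.
  by rewrite /g b1 b2 mulr0 ltxx.
rewrite -gb.
have := @cnt_out H jH; case: ifP => xj ec.
  apply: le_trans (@shift_sum R g s (cnt X' H).+1 N g0 gs).
  apply: ler_sum => k _; rewrite /Err (negbTE jH) ec /fk.
  case: (leqP (cnt X' H).+1 k) => hk.
    have -> : (cnt X' H <= k)%N by apply: ltnW.
    have -> : (k - cnt X' H = (k - (cnt X' H).+1).+1)%N by lia.
    by rewrite cmp_div /g if_neg.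
  by rewrite if_same.
pose g2 v : R := if (1 + e0) * (if v is u.+1 then 'C(s, u) else 0)%:R < 'C(s, v)%:R
   then 'C(s, v)%:R / 2 ^+ s else 0.
have g20 : forall v, 0 <= g2 v.
  by move=> v; rewrite /g2; case: ifP => // _; rewrite divr_ge0 // exprn_ge0.
have g2s : forall v, (s < v)%N -> g2 v = 0.
  move=> v sv; have b1 : 'C(s, v) = 0%N by rewrite bin_small.
  by rewrite /g2 b1 mulr0n mul0r if_same.
have hrev : \sum_(v < s.+1) g2 v = \sum_(v < s.+1) g v.
  rewrite (reindex_inj rev_ord_inj) /=; apply: eq_bigr => v _.
  rewrite subSS /g2 /g.
  have vs : (v <= s)%N by rewrite -ltnS.
  rewrite bin_sub //.
  case: (ltnP v s) => hv.
    have -> : (s - v = (s - v.+1).+1)%N by lia.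
    by rewrite bin_sub.
  have vE : nat_of_ord v = s by lia.
  by rewrite vE subnn (bin_small (ltnSn s)).
rewrite -hrev.
apply: le_trans (@shift_sum R g2 s (cnt X H) N g20 g2s).
apply: ler_sum => k _; rewrite /Err (negbTE jH) ec /fk.
case: (leqP (cnt X H) k) => hk; last by rewrite if_same.
case: (ltnP (cnt X H) k) => hk2.
  have -> : (k - cnt X H = (k - (cnt X H).+1).+1)%N by lia.
  by rewrite cmp_div /g2 if_neg.
have kE : (k : nat) = cnt X H by apply/eqP; rewrite eqn_leq hk hk2.
rewrite kE subnn /g2 /= mulr0n mulr0 bin0 ltr01.
have p : (0 : R) < 1 / 2 ^+ s by rewrite divr_gt0 // exprn_gt0.
by rewrite [X in if X then _ else _]leNgt p /=.
Qed.

Lemma main_k0 (R : realType) (s k : nat) (e0 : R) : 0 <= e0 ->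
  \sum_(H : {set 'I_n} | #|H| == s) fk R s k (cnt X H) <=
  (1 + e0) * \sum_(H : {set 'I_n} | #|H| == s) fk R s k (cnt X' H)
  + \sum_(H : {set 'I_n} | #|H| == s) Err R s k e0 H.
Proof.
move=> e00; rewrite mulr_sumr -big_split /=; apply: ler_sum => H _.
rewrite /Err; case: ifP => jH.
  rewrite cnt_in // addr0 -[X in X <= _]mul1r ler_wpM2r ?fk_ge0 //; lra.
case: ifP => h; last by rewrite lerDr mulr_ge0 ?fk_ge0 //; lra.
by rewrite addr0.
Qed.

End Comb.

Theorem claim4p5 (R : realType) (n s : nat) (delta : R) :
  0 < delta -> (s <= n)%N -> 8 * ln (4 / delta) < s%:R ->
  @C_dp R n s
    (Num.sqrt (32 * ln (4 / delta) / s%:R) * (1 - s%:R / n%:R))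
    (delta / 2).
Proof.
move=> dpos sn hs X X' nb W.
have /cards1P [j Ej] : #|[set i | X i != X' i]| == 1%N by rewrite nb.
have XX' : forall i, i != j -> X i = X' i.
  move=> i ij; have : i \notin [set i | X i != X' i] by rewrite Ej inE.
  by rewrite inE negbK => /eqP.
have Xj : X' j = ~~ X j.
  have : j \in [set i | X i != X' i] by rewrite Ej inE.
  by rewrite inE; case: (X j); case: (X' j).
set L := ln (4 / delta).
have hsL : 8 * L < s%:R by [].
set e0 := Num.sqrt (32 * L / s%:R).
set eps := e0 * (1 - s%:R / n%:R).
have e00 : 0 <= e0 by rewrite sqrtr_ge0.
set beta := \sum_(v < s.+1 | (1 + e0) * 'C(s, v.+1)%:R < 'C(s, v)%:R) ('C(s, v)%:R / 2 ^+ s : R).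
have tail : beta <= delta / 2.
  case: (lerP L 0) => L0.
    have full : beta <= \sum_(v < s.+1) ('C(s, v)%:R / 2 ^+ s : R).
      rewrite /beta big_mkcond /=; apply: ler_sum => v _.
      by case: ifP => // _; rewrite divr_ge0 // exprn_ge0.
    have one : \sum_(v < s.+1) ('C(s, v)%:R / 2 ^+ s : R) = 1.
      rewrite -mulr_suml.
      have -> : \sum_(v < s.+1) ('C(s, v)%:R : R) = 2 ^+ s.
        have := exprD1n (1 : R) s; rewrite -[1 + 1]/(2 : R) => ->.
        by apply: eq_bigr => i _; rewrite expr1n.
      by rewrite mulfV // gt_eqF // exprn_gt0.
    have d4 : 4 <= delta.
      case: (lerP 4 delta) => // d4.
      have : 1 < 4 / delta by rewrite ltr_pdivlMr // mul1r.
      move/ln_gt0; rewrite -/L; lra.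
    apply: (le_trans full); rewrite one; lra.
  have sR : (0 : R) < s%:R by lra.
  have s0 : (0 < s)%N by rewrite -(ltr0n R).
  have e02 : e0 ^+ 2 = 32 * L / s%:R.
    by rewrite /e0 sqr_sqrtr // divr_ge0 //; lra.
  have e0lt : e0 < 2.
    have : e0 ^+ 2 < 4.
      rewrite e02 ltr_pdivrMr //; lra.
    rewrite expr2 => h; nra.
  have eL : e0 ^+ 2 * s%:R = 32 * L by rewrite e02; field; rewrite gt_eqF.
  apply: (le_trans (@tail_bound R s e0 L s0 e00 e0lt eL)).
  have -> : expR (- L) = delta / 4.
    rewrite expRN /L lnK; last by rewrite posrE divr_gt0.
    by rewrite invf_div.
  lra.
have beta0 : 0 <= beta.
  by rewrite /beta; apply: sumr_ge0 => v _; rewrite divr_ge0 // exprn_ge0.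
have perk : forall k, \sum_(H : {set 'I_n} | #|H| == s) fk R s k (cnt n X H) <=
  (1 + eps) * \sum_(H : {set 'I_n} | #|H| == s) fk R s k (cnt n X' H)
  + \sum_(H : {set 'I_n} | #|H| == s) Err n X X' j R s k e0 H.
  move=> k; case: (posnP s) => s0.
    have e0z : e0 = 0 by rewrite /e0 s0 invr0 mulr0 sqrtr0.
    have -> : eps = e0 by rewrite /eps e0z !mul0r.
    exact: main_k0.
  exact: main_k.
have Cpos : (0 : R) < 'C(n, s)%:R by rewrite ltr0n bin_gt0.
have Err0 : forall k H, 0 <= Err n X X' j R s k e0 H.
  move=> k H; rewrite /Err; case: ifP => // _; case: ifP => // _; exact: fk_ge0.
have CE : forall Y k, C_prob R s Y k =
   ('C(n, s)%:R)^-1 * \sum_(H : {set 'I_n} | #|H| == s) fk R s k (cnt n Y H) by [].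
rewrite /C_probW.
apply: (@le_trans _ _ (\sum_(k < n.+1 | W k) (expR eps * C_prob R s X' k
   + ('C(n, s)%:R)^-1 * \sum_(H : {set 'I_n} | #|H| == s) Err n X X' j R s k e0 H))).
  apply: ler_sum => k _; rewrite !CE mulrCA -mulrDr.
  rewrite ler_pM2l ?invr_gt0 //; apply: (le_trans (perk k)); rewrite lerD2r.
  rewrite ler_wpM2r ?expR_ge1Dx //; apply: sumr_ge0 => H _; exact: fk_ge0.
rewrite big_split /= -mulr_sumr lerD2l.
apply: (@le_trans _ _ (\sum_(k < n.+1) ('C(n, s)%:R)^-1 *
   \sum_(H : {set 'I_n} | #|H| == s) Err n X X' j R s k e0 H)).
  rewrite [X in X <= _]big_mkcond /=; apply: ler_sum => k _; case: ifP => // _.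
  by rewrite mulr_ge0 ?invr_ge0 ?ler0n //; apply: sumr_ge0 => H _; exact: Err0.
rewrite -mulr_sumr exchange_big /=.
apply: (@le_trans _ _ (('C(n, s)%:R)^-1 * \sum_(H : {set 'I_n} | #|H| == s) beta)).
  rewrite ler_wpM2l ?invr_ge0 ?ler0n //; apply: ler_sum => H _.
  case: (boolP (j \in H)) => jH.
    by rewrite big1 // => k _; rewrite /Err jH.
  exact: err_sum.
rewrite (eq_bigl (fun H => H \in [set H : {set 'I_n} | #|H| == s])); last by move=> H; rewrite inE.
rewrite sumr_const card_draws card_ord -[beta *+ _]mulr_natl mulrA mulVf ?gt_eqF // mul1r.
exact: tail.
Qed.
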